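(* Let $M$ be a matroid on $E=[n]$, $t,u$ positive integers, and $\mathcal F$ the regular mixed subdivision of $u\Delta+P(M)+t\nabla$ defined below. Every lattice point of $u\Delta+P(M)+t\nabla$ lies in some top-degree face of $\mathcal F$.
   Context: $M$ is a matroid on $E=[n]=\{1,\dots,n\}$, ordered naturally. $P(M)\subseteq\mathbb R^E$ is the convex hull of the indicator vectors $\mathbf e_B$ of bases $B$. For nonempty $S\subseteq E$, $\Delta_S=\operatorname{conv}\{\mathbf e_i:i\in S\}$, $\nabla_S=-\Delta_S$, $\Delta=\Delta_E$, $\nabla=\nabla_E$. The subdivision: fix positive integers $t,u$ and reals $0<\alpha_1<\dots<\alpha_n$, $0<\beta_1<\dots<\beta_n$. Let $\mathit{Lift}=\operatorname{conv}\{(u\mathbf e_i,\alpha_i)\}+(P(M)\times\{0\})+\operatorname{conv}\{(-t\mathbf e_i,\beta_i)\}\subseteq\mathbb R^E\times\mathbb R$. The lower faces of $\mathit{Lift}$ are the faces on which some linear functional with last coordinate $-1$ attains its maximum; their projections to $\mathbb R^E$ form the regular mixed subdivision $\mathcal F$ of $u\Delta+P(M)+t\nabla$. Each cell is canonically written $F+G+H$ where $F$, $G$, $H$ are the projections of the faces of the three summands of $\mathit{Lift}$ maximizing the same functional, so $F$ is a face of $u\Delta$, $G$ a face of $P(M)$, $H$ a face of $t\nabla$. A top-degree face is a maximal cell $F+G+H$ of $\mathcal F$ in which $G$ is a vertex of $P(M)$. *)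

(* Defs.v *)
From HB Require Import structures.
From mathcomp Require Import all_boot all_order all_algebra.
Set Implicit Arguments. Unset Strict Implicit. Unset Printing Implicit Defensive.
Import Order.TTheory GRing.Theory Num.Theory.
Local Open Scope ring_scope.

(* ---------- Matroids on E = 'I_n (E = [n] shifted to 0..n-1) ---------- *)
Record matroid (n : nat) := Matroid {
  bases : {set {set 'I_n}};
  bases_nonempty : bases != set0;
  bases_exchange : forall B1 B2, B1 \in bases -> B2 \in bases ->
    forall x, x \in B1 :\: B2 ->
      exists2 y, y \in B2 :\: B1 & ((B1 :\ x) :|: [set y]) \in bases }.

Section Geo.
Variable R : realFieldType.

Definition subset_pts (K : finType) (S T : (K -> R) -> Prop) :=
  forall x, S x -> T x.

Definition conv (K I : finType) (A : {set I}) (p : I -> K -> R) : (K -> R) -> Prop :=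
  fun x => exists lam : I -> R,
    (forall i, i \in A -> 0 <= lam i) /\ \sum_(i in A) lam i = 1 /\
    forall k, x k = \sum_(i in A) lam i * p i k.

Definition msum3 (K : finType) (S1 S2 S3 : (K -> R) -> Prop) : (K -> R) -> Prop :=
  fun x => exists a b c, S1 a /\ S2 b /\ S3 c /\ forall k, x k = a k + b k + c k.

Definition dot (K : finType) (w x : K -> R) : R := \sum_k w k * x k.

Definition face (K : finType) (S : (K -> R) -> Prop) (w : K -> R) : (K -> R) -> Prop :=
  fun x => S x /\ forall y, S y -> dot w y <= dot w x.

Definition is_vertex (K : finType) (S : (K -> R) -> Prop) (v : K -> R) :=
  exists c : K -> R, forall x, face S c x <-> (forall k, x k = v k).

(* R^E x R is modelled as functions on option 'I_n; None = last coordinate *)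
Definition proj (n : nat) (S : (option 'I_n -> R) -> Prop) : ('I_n -> R) -> Prop :=
  fun x => exists y, S y /\ forall i, y (Some i) = x i.

Definition lowfun (n : nat) (w : 'I_n -> R) : option 'I_n -> R :=
  fun k => match k with Some j => w j | None => -1 end.

Variables (n : nat) (M : matroid n) (t u : nat) (alpha beta : 'I_n -> R).

Definition indic (B : {set 'I_n}) : 'I_n -> R := fun j => if j \in B then 1 else 0.
Definition sunit (c : R) (i : 'I_n) : 'I_n -> R := fun j => if j == i then c else 0.

Definition PM : ('I_n -> R) -> Prop := conv (bases M) indic.
Definition uDelta : ('I_n -> R) -> Prop := conv setT (sunit u%:R).
Definition tNabla : ('I_n -> R) -> Prop := conv setT (sunit (- t%:R)).
Definition bigPoly : ('I_n -> R) -> Prop := msum3 uDelta PM tNabla.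

Definition lift1 : (option 'I_n -> R) -> Prop :=
  conv setT (fun i k => match k with Some j => sunit u%:R i j | None => alpha i end).
Definition lift2 : (option 'I_n -> R) -> Prop :=
  conv (bases M) (fun B k => match k with Some j => indic B j | None => 0 end).
Definition lift3 : (option 'I_n -> R) -> Prop :=
  conv setT (fun i k => match k with Some j => sunit (- t%:R) i j | None => beta i end).
Definition Lift : (option 'I_n -> R) -> Prop := msum3 lift1 lift2 lift3.

(* the cell of the regular mixed subdivision given by the functional (w,-1),
   i.e. the projection of the lower face of Lift, and its canonical summands *)
Definition cell (w : 'I_n -> R) := proj (face Lift (lowfun w)).
Definition cellF (w : 'I_n -> R) := proj (face lift1 (lowfun w)).
Definition cellG (w : 'I_n -> R) := proj (face lift2 (lowfun w)).
Definition cellH (w : 'I_n -> R) := proj (face lift3 (lowfun w)).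

Definition maximal_cell (w : 'I_n -> R) :=
  forall w', subset_pts (cell w) (cell w') -> subset_pts (cell w') (cell w).

Definition top_degree (w : 'I_n -> R) :=
  maximal_cell w /\
  exists v, is_vertex PM v /\ forall x, cellG w x <-> (forall i, x i = v i).

End Geo.

(* Main.v *)
Require Import Defs.
From HB Require Import structures.
From mathcomp Require Import all_boot all_order all_algebra.
From mathcomp Require Import zify lra.
Import Order.TTheory GRing.Theory Num.Theory.
Local Open Scope ring_scope.
Set Implicit Arguments. Unset Strict Implicit. Unset Printing Implicit Defensive.

Lemma sum_opt (V : nmodType) (T : finType) (F : option T -> V) :
  \sum_(k : option T) F k = F None + \sum_(i : T) F (Some i).
Proof.
rewrite (bigD1 None) //=; congr (_ + _).
rewrite (reindex_omap Some (fun k => k)) //=; last by case.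
by apply: eq_bigl => j; rewrite eqxx.
Qed.

Section Gen.
Variable R : realFieldType.

Lemma dot_ext (K : finType) (c x y : K -> R) :
  (forall k, x k = y k) -> dot c x = dot c y.
Proof. by move=> H; rewrite /dot; apply: eq_bigr => k _; rewrite H. Qed.

Lemma dot_conv (K I : finType) (A : {set I}) (p : I -> K -> R) (lam : I -> R)
  (c : K -> R) :
  dot c (fun k => \sum_(i in A) lam i * p i k) = \sum_(i in A) lam i * dot c (p i).
Proof.
rewrite /dot; under eq_bigr => k _ do rewrite mulr_sumr.
rewrite exchange_big /=; apply: eq_bigr => i _; rewrite mulr_sumr.
by apply: eq_bigr => k _; rewrite mulrCA.
Qed.

Lemma dot_add3 (K : finType) (c x a b d : K -> R) :
  (forall k, x k = a k + b k + d k) -> dot c x = dot c a + dot c b + dot c d.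
Proof.
move=> H; rewrite /dot; under eq_bigr => k _ do rewrite H !mulrDr.
by rewrite !big_split.
Qed.

Lemma conv_le (K I : finType) (A : {set I}) (p : I -> K -> R) (c : K -> R) m x :
  conv A p x -> (forall i, i \in A -> dot c (p i) <= m) -> dot c x <= m.
Proof.
move=> [lam [H0 [H1 Hx]]] Hm; rewrite (dot_ext _ Hx) dot_conv.
apply: (@le_trans _ _ (\sum_(i in A) lam i * m)).
  by apply: ler_sum => i Hi; apply: ler_wpM2l; [apply: H0 | apply: Hm].
by rewrite -mulr_suml H1 mul1r.
Qed.

Lemma conv_face (K I : finType) (A : {set I}) (p : I -> K -> R) (c : K -> R) m
  (lam : I -> R) :
  (forall i, i \in A -> dot c (p i) <= m) -> (forall i, i \in A -> 0 <= lam i) ->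
  \sum_(i in A) lam i = 1 -> (forall i, i \in A -> lam i != 0 -> dot c (p i) = m) ->
  face (conv A p) c (fun k => \sum_(i in A) lam i * p i k).
Proof.
move=> Hm H0 H1 Heq; split; first by exists lam.
move=> y Hy; apply: (le_trans (conv_le Hy Hm)).
rewrite dot_conv.
have -> : \sum_(i in A) lam i * dot c (p i) = \sum_(i in A) lam i * m.
  apply: eq_bigr => i Hi; case: (eqVneq (lam i) 0) => [->|Hn]; first by rewrite !mul0r.
  by rewrite Heq.
by rewrite -mulr_suml H1 mul1r.
Qed.

Lemma sum_ind (I : finType) (A : {set I}) (i0 : I) (F : I -> R) :
  i0 \in A -> \sum_(i in A) (if i == i0 then 1 else 0) * F i = F i0.
Proof.
move=> Hi0; rewrite (bigD1 i0) //= eqxx mul1r big1 ?addr0 //.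
by move=> i /andP[_ /negbTE ->]; rewrite mul0r.
Qed.

Lemma conv_vert (K I : finType) (A : {set I}) (p : I -> K -> R) i0 x :
  i0 \in A -> (forall k, x k = p i0 k) -> conv A p x.
Proof.
move=> Hi0 Hx; exists (fun i => if i == i0 then 1 else 0); split.
  by move=> i _; case: (i == i0).
split; first by rewrite (bigD1 i0) //= eqxx big1 ?addr0 // => i /andP[_ /negbTE ->].
by move=> k; rewrite sum_ind.
Qed.

Lemma conv_uniq (K I : finType) (A : {set I}) (p : I -> K -> R) (c : K -> R) i0 :
  i0 \in A -> (forall i, i \in A -> i != i0 -> dot c (p i) < dot c (p i0)) ->
  forall x, face (conv A p) c x <-> forall k, x k = p i0 k.
Proof.
move=> Hi0 Hlt x; split.
  move=> [[lam [H0 [H1 Hx]]] Hmax].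
  have Hv := Hmax _ (conv_vert Hi0 (fun k => erefl)).
  rewrite (dot_ext _ Hx) dot_conv in Hv.
  have Hs : \sum_(i in A) lam i * (dot c (p i0) - dot c (p i)) = 0.
    apply/eqP; rewrite eq_le; apply/andP; split; last first.
      by apply: sumr_ge0 => i Hi; apply: mulr_ge0; [apply: H0|];
        case: (eqVneq i i0) => [->|Hne]; rewrite ?subrr // subr_ge0 ltW // Hlt.
    under eq_bigr => i _ do rewrite mulrBr.
    by rewrite sumrB -mulr_suml H1 mul1r subr_le0.
  have Hz : forall i, i \in A -> i != i0 -> lam i = 0.
    move=> i Hi Hne.
    have := psumr_eq0P _ Hs Hi.
    move=> /(_ _)/eqP; rewrite mulf_eq0 subr_eq0 => H.
    have /H : (forall i, i \in A -> 0 <= lam i * (dot c (p i0) - dot c (p i))).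
      move=> j Hj; apply: mulr_ge0; first by apply: H0.
      by case: (eqVneq j i0) => [->|Hne']; rewrite ?subrr // subr_ge0 ltW // Hlt.
    by case/orP => /eqP // Heq; move: (Hlt _ Hi Hne); rewrite Heq ltxx.
  have Hl0 : lam i0 = 1.
    by rewrite -H1 (bigD1 i0) //= big1 ?addr0 // => i /andP[Hi Hne]; apply: Hz.
  move=> k; rewrite Hx (bigD1 i0) //= Hl0 mul1r big1 ?addr0 //.
  by move=> i /andP[Hi Hne]; rewrite Hz ?mul0r.
move=> Hx; split; first exact: conv_vert Hx.
move=> y Hy; rewrite (dot_ext _ Hx); apply: (conv_le Hy) => i Hi.
by case: (eqVneq i i0) => [->|Hne] //; apply: ltW; apply: Hlt.
Qed.

Lemma face_msum3 (K : finType) (S1 S2 S3 : (K -> R) -> Prop) c a b d :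
  face S1 c a -> face S2 c b -> face S3 c d ->
  face (msum3 S1 S2 S3) c (fun k => a k + b k + d k).
Proof.
move=> [Ha Ma] [Hb Mb] [Hd Md]; split; first by exists a, b, d.
move=> y [a' [b' [d' [Ha' [Hb' [Hd' Hy]]]]]].
rewrite (dot_add3 c Hy) (dot_add3 c (a:=a) (b:=b) (d:=d) (fun k => erefl)).
by apply: lerD; [apply: lerD|]; [apply: Ma|apply: Mb|apply: Md].
Qed.

Lemma exists_max_seq (T : eqType) (s : seq T) (f : T -> R) :
  s != [::] -> exists2 a, a \in s & forall b, b \in s -> f b <= f a.
Proof.
elim: s => // a s IH _.
case: s IH => [|a' s'] IH.
  by exists a; rewrite ?mem_seq1 // => b; rewrite mem_seq1 => /eqP ->.
have [m Hm Hmax] := IH isT.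
case: (leP (f a) (f m)) => H.
  exists m; first by rewrite inE Hm orbT.
  by move=> b; rewrite inE => /orP[/eqP ->|]; [|apply: Hmax].
exists a; first by rewrite inE eqxx.
move=> b; rewrite inE => /orP[/eqP ->|Hb] //.
by apply: (le_trans (Hmax _ Hb)); apply: ltW.
Qed.

Lemma exists_max (T : finType) (A : {set T}) (f : T -> R) :
  A != set0 -> exists2 a, a \in A & forall b, b \in A -> f b <= f a.
Proof.
case/set0Pn => a0 Ha0.
have Hne : enum A != [::].
  by apply/eqP => He; have := mem_enum A a0; rewrite He Ha0.
have [a Ha Hmax] := exists_max_seq f Hne.
exists a; first by rewrite -mem_enum.
by move=> b Hb; apply: Hmax; rewrite mem_enum.
Qed.

Lemma conv_ge (K I : finType) (A : {set I}) (p : I -> K -> R) (c : K -> R) m x :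
  conv A p x -> (forall i, i \in A -> m <= dot c (p i)) -> m <= dot c x.
Proof.
move=> [lam [H0 [H1 Hx]]] Hm; rewrite (dot_ext _ Hx) dot_conv.
apply: (@le_trans _ _ (\sum_(i in A) lam i * m)); last first.
  by apply: ler_sum => i Hi; apply: ler_wpM2l; [apply: H0 | apply: Hm].
by rewrite -mulr_suml H1 mul1r.
Qed.

Lemma conv_const (K I : finType) (A : {set I}) (p : I -> K -> R) (c : K -> R) m x :
  conv A p x -> (forall i, i \in A -> dot c (p i) = m) -> dot c x = m.
Proof.
move=> Hx Hm; apply/eqP; rewrite eq_le (conv_le Hx) ?(conv_ge Hx) //.
  by move=> i Hi; rewrite Hm.
by move=> i Hi; rewrite Hm.
Qed.

End Gen.


Section Mat.
Variables (n : nat) (M : matroid n).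

Lemma exch_diff (B1 B2 : {set 'I_n}) x y :
  x \in B1 :\: B2 -> y \in B2 ->
  (B1 :\ x :|: [set y]) :\: B2 = (B1 :\: B2) :\ x.
Proof.
move=> Hx Hy; apply/setP => z; rewrite !inE.
case: (eqVneq z y) => [->|]; first by rewrite Hy /= andbF.
by rewrite orbF; case: (z \in B2); rewrite /= ?andbF ?andbT.
Qed.

Lemma card_exch (B : {set 'I_n}) x y :
  x \in B -> y \notin B -> #|B :\ x :|: [set y]| = #|B|.
Proof.
move=> Hx Hy; rewrite setUC cardsU1 (cardsD1 x B) Hx.
have -> : (y \in B :\ x) = false by rewrite inE (negbTE Hy) andbF.
by rewrite add1n.
Qed.

Lemma bases_card B1 B2 : B1 \in bases M -> B2 \in bases M -> #|B1| = #|B2|.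
Proof.
move=> + HB2; move: {2}#|B1 :\: B2| (erefl #|B1 :\: B2|) => k.
elim: k B1 => [|k IH] B1 Hk HB1.
  have H12 : B1 \subset B2 by rewrite -setD_eq0 -cards_eq0 Hk.
  have H21 : B2 \subset B1.
    apply/subsetP => z Hz; apply/negPn/negP => Hn.
    have Hz' : z \in B2 :\: B1 by rewrite inE Hn Hz.
    have [y Hy _] := bases_exchange HB2 HB1 Hz'.
    move: Hy; rewrite inE => /andP[Hy2 Hy1].
    by move: H12 => /subsetP/(_ y Hy1); rewrite (negbTE Hy2).
  by rewrite (eqP (_ : B1 == B2)) // eqEsubset H12 H21.
have /set0Pn [x Hx] : B1 :\: B2 != set0 by rewrite -card_gt0 Hk.
have [y Hy HB1'] := bases_exchange HB1 HB2 Hx.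
have Hx1 : x \in B1 by move: Hx; rewrite inE => /andP[].
have Hy1 : y \notin B1 by move: Hy; rewrite inE => /andP[].
have Hy2 : y \in B2 by move: Hy; rewrite inE => /andP[].
rewrite -(card_exch Hx1 Hy1); apply: IH => //.
by rewrite exch_diff //; move: Hk; rewrite (cardsD1 x (B1 :\: B2)) Hx; case.
Qed.

Variable R : realFieldType.
Variable w : 'I_n -> R.
Definition wt (B : {set 'I_n}) := \sum_(j in B) w j.

Lemma wt_exch (B : {set 'I_n}) x y :
  x \in B -> y \notin B -> wt (B :\ x :|: [set y]) = wt B - w x + w y.
Proof.
move=> Hx Hy; rewrite /wt setUC big_setU1 /=; last by rewrite inE (negbTE Hy) andbF.
by rewrite (big_setD1 x Hx) /= [w x + _]addrC addrK addrC.
Qed.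

Definition maxb (B : {set 'I_n}) :=
  B \in bases M /\ forall B', B' \in bases M -> wt B' <= wt B.

Lemma maxb_exists : exists B, maxb B.
Proof.
have [B HB Hmax] := exists_max wt (bases_nonempty M).
by exists B.
Qed.

Lemma maxb_aux Ba Bb x : injective w -> maxb Ba -> Bb \in bases M ->
  x \in Ba :\: Bb ->
  (forall z, z \in (Ba :\: Bb) :|: (Bb :\: Ba) -> w x <= w z) -> False.
Proof.
move=> Hinj [HBa Ma] HBb Hx Hmin.
have [y Hy HB'] := bases_exchange HBa HBb Hx.
have Hx1 : x \in Ba by move: Hx; rewrite inE => /andP[].
have Hy1 : y \notin Ba by move: Hy; rewrite inE => /andP[].
have Hxy : w x < w y.
  have Hyz : y \in (Ba :\: Bb) :|: (Bb :\: Ba) by rewrite inE Hy orbT.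
  rewrite lt_neqAle (Hmin _ Hyz) andbT.
  by apply/eqP => /Hinj Hxy; move: Hy1; rewrite -Hxy Hx1.
have := Ma _ HB'; rewrite wt_exch // => H.
have H2 : wt Ba < wt Ba - w x + w y by rewrite -addrA ltrDl addrC subr_gt0.
by move: H2; rewrite ltNge H.
Qed.

Lemma maxb_unique B1 B2 : injective w -> maxb B1 -> maxb B2 -> B1 = B2.
Proof.
move=> Hinj H1 H2; apply/eqP; apply/negPn/negP => Hne.
have HD : (B1 :\: B2) :|: (B2 :\: B1) != set0.
  apply: contra Hne; rewrite setU_eq0 !setD_eq0 => /andP[a b].
  by rewrite eqEsubset a b.
have [x Hx Hmin] := exists_max (fun z => - w z) HD.
have Hmin' : forall z, z \in (B1 :\: B2) :|: (B2 :\: B1) -> w x <= w z.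
  by move=> z /Hmin; rewrite lerN2.
move: Hx; rewrite inE => /orP[Hx|Hx].
  by apply: (maxb_aux Hinj H1 _ Hx Hmin'); case: H2.
apply: (maxb_aux Hinj H2 _ Hx); first by case: H1.
by move=> z Hz; apply: Hmin'; rewrite setUC.
Qed.

Definition upward (U : {set 'I_n}) := forall a b, a \in U -> b \notin U -> w b < w a.

Lemma maxb_up2 Bs B U : maxb Bs -> B \in bases M -> upward U ->
  B :\: Bs \subset U -> (#|B :&: U| <= #|Bs :&: U|)%N.
Proof.
move=> [HBs Ms] HB Hup Hsub.
have Hsub2 : Bs :\: B \subset U.
  apply/subsetP => z Hz; apply/negPn/negP => HzU.
  have [y Hy HB'] := bases_exchange HBs HB Hz.
  have Hz1 : z \in Bs by move: Hz; rewrite inE => /andP[].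
  have Hy1 : y \notin Bs by move: Hy; rewrite inE => /andP[].
  have HyU : y \in U by apply: (subsetP Hsub); move: Hy; rewrite !inE => /andP[-> ->].
  have := Ms _ HB'; rewrite wt_exch // => H.
  have H2 : wt Bs < wt Bs - w z + w y.
    by rewrite -addrA ltrDl addrC subr_gt0; apply: Hup.
  by move: H2; rewrite ltNge H.
have key : forall A1 A2, A1 :\: A2 \subset U ->
    #|A1 :&: U| = (#|A1 :&: A2 :&: U| + #|A1 :\: A2|)%N.
  move=> A1 A2 Hs; rewrite -(cardsID A2 (A1 :&: U)); congr (_ + _)%N.
    by rewrite -setIA [U :&: A2]setIC setIA.
  apply: eq_card => z; rewrite !inE.
  case: (boolP (z \in A2)) => //= Hz1; case: (boolP (z \in A1)) => //= HzB.
  by apply: (subsetP Hs); rewrite inE Hz1 HzB.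
have E3 : #|B :\: Bs| = #|Bs :\: B|.
  apply/eqP; rewrite -(eqn_add2l #|B :&: Bs|) cardsID [B :&: Bs]setIC cardsID.
  by rewrite (bases_card HB HBs).
by rewrite (key _ _ Hsub) (key _ _ Hsub2) E3 [B :&: Bs]setIC.
Qed.

Lemma maxb_up Bs B U : maxb Bs -> B \in bases M -> upward U ->
  (#|B :&: U| <= #|Bs :&: U|)%N.
Proof.
move=> HBs HB Hup.
move: {2}#|B :\: Bs| (erefl #|B :\: Bs|) => k.
elim: k B HB => [|k IH] B HB Hk.
  apply: maxb_up2 => //; apply/subsetP => z Hz.
  by move: Hk => /eqP; rewrite cards_eq0 => /eqP He; rewrite He inE in Hz.
case: (boolP [exists z, (z \in B :\: Bs) && (z \notin U)]).
  move/existsP => [x /andP[Hx HxU]].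
  have [y Hy HB'] := bases_exchange HB (proj1 HBs) Hx.
  have Hx1 : x \in B by move: Hx; rewrite inE => /andP[].
  have Hy1 : y \notin B by move: Hy; rewrite inE => /andP[].
  have Hy2 : y \in Bs by move: Hy; rewrite inE => /andP[].
  apply: (leq_trans _ (IH _ HB' _)); last first.
    by rewrite exch_diff //; move: Hk; rewrite (cardsD1 x (B :\: Bs)) Hx; case.
  apply: subset_leq_card; apply/subsetP => z; rewrite !inE.
  case/andP => HzB HzU; rewrite HzU andbT.
  have Hzx : z != x by apply/eqP => Hzx; move: HzU; rewrite Hzx (negbTE HxU).
  by rewrite Hzx HzB /= ?orbT ?andbT.
move/existsPn => Hall.
apply: maxb_up2 => //; apply/subsetP => z Hz.
by move: (Hall z); rewrite Hz /= negbK.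
Qed.

Lemma maxb_down Bs B T : maxb Bs -> B \in bases M -> upward (~: T) ->
  (#|Bs :&: T| <= #|B :&: T|)%N.
Proof.
move=> HBs HB Hup.
have H := maxb_up HBs HB Hup.
have E1 := cardsID T B; have E2 := cardsID T Bs.
rewrite (bases_card HB (proj1 HBs)) setDE in E1; rewrite setDE in E2.
rewrite -(leq_add2r #|B :&: ~: T|) E1 -E2 leq_add2l.
done.
Qed.
End Mat.


Section Dots.
Variable R : realFieldType.
Lemma dot_low n (w : 'I_n -> R) (y : option 'I_n -> R) :
  dot (lowfun w) y = dot w (fun j => y (Some j)) - y None.
Proof. by rewrite /dot sum_opt /= mulN1r addrC. Qed.

Lemma dot_sunit n (w : 'I_n -> R) c i : dot w (sunit c i) = w i * c.
Proof.
rewrite /dot (bigD1 i) //= /sunit eqxx big1 ?addr0 // => j /negbTE ->.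
by rewrite mulr0.
Qed.

Lemma sum_sunit n (f : 'I_n -> R) c i : \sum_(k in setT) f k * sunit c k i = f i * c.
Proof.
rewrite (bigD1 i) ?inE //= /sunit eqxx big1 ?addr0 // => j /andP[_ Hj].
by rewrite eq_sym (negbTE Hj) mulr0.
Qed.

Lemma dot_indic n (w : 'I_n -> R) B : dot w (indic R B) = \sum_(j in B) w j.
Proof.
rewrite /dot [RHS]big_mkcond /=; apply: eq_bigr => j _; rewrite /indic.
by case: (j \in B); rewrite ?mulr1 ?mulr0.
Qed.

Lemma dot_indicl n (f : 'I_n -> R) B : dot (indic R B) f = \sum_(j in B) f j.
Proof.
rewrite /dot [RHS]big_mkcond /=; apply: eq_bigr => j _; rewrite /indic.
by case: (j \in B); rewrite ?mul1r ?mul0r.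
Qed.

Lemma sum_indic_card n (B S : {set 'I_n}) : \sum_(j in B) indic R S j = (#|B :&: S|)%:R :> R.
Proof.
rewrite /indic -big_mkcondr /=.
rewrite (eq_bigl (fun j => j \in B :&: S)) ?sumr_const // => j.
by rewrite inE.
Qed.
End Dots.


Section Main.
Variables (R : realFieldType) (n' : nat) (M : matroid n'.+1) (t u : nat)
  (alpha beta : 'I_n'.+1 -> R) (z : 'I_n'.+1 -> int).
Hypotheses (tpos : (0 < t)%N) (upos : (0 < u)%N)
  (amono : forall i j : 'I_n'.+1, (i < j)%N -> alpha i < alpha j)
  (bmono : forall i j : 'I_n'.+1, (i < j)%N -> beta i < beta j).
Local Notation n := n'.+1.
Local Notation o := (@ord0 n').

Definition Sset := [set i : 'I_n | (i != o) && (1 <= z i)].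
Definition U0 := [set i : 'I_n | (i == o) || (1 <= z i)].
Definition Tset := ~: U0.
Definition wv (i : 'I_n) : R :=
  if i == o then 0 else if 1 <= z i then (alpha i - alpha o) / u%:R
  else (beta o - beta i) / t%:R.

Lemma u_gt0 : (0 : R) < u%:R. Proof. by rewrite ltr0n. Qed.
Lemma t_gt0 : (0 : R) < t%:R. Proof. by rewrite ltr0n. Qed.

Lemma alpha0 i : i != o -> alpha o < alpha i.
Proof. by move=> Hi; apply: amono; rewrite lt0n. Qed.
Lemma beta0 i : i != o -> beta o < beta i.
Proof. by move=> Hi; apply: bmono; rewrite lt0n. Qed.

Lemma inS i : (i \in Sset) = (i != o) && (1 <= z i). Proof. by rewrite inE. Qed.
Lemma inT i : (i \in Tset) = (i != o) && ~~ (1 <= z i).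
Proof. by rewrite !inE negb_or. Qed.

Lemma wv0 : wv o = 0. Proof. by rewrite /wv eqxx. Qed.
Lemma wvS i : i \in Sset -> wv i = (alpha i - alpha o) / u%:R.
Proof. by rewrite inS /wv => /andP[/negbTE -> ->]. Qed.
Lemma wvT i : i \in Tset -> wv i = (beta o - beta i) / t%:R.
Proof. by rewrite inT /wv => /andP[/negbTE -> /negbTE ->]. Qed.

Lemma wvS_gt0 i : i \in Sset -> 0 < wv i.
Proof.
move=> Hi; rewrite wvS // divr_gt0 ?u_gt0 // subr_gt0 alpha0 //.
by move: Hi; rewrite inS => /andP[].
Qed.
Lemma wvT_lt0 i : i \in Tset -> wv i < 0.
Proof.
move=> Hi; rewrite wvT // pmulr_llt0 ?invr_gt0 ?t_gt0 // subr_lt0 beta0 //.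
by move: Hi; rewrite inT => /andP[].
Qed.

Lemma trich i : [\/ i = o, i \in Sset | i \in Tset].
Proof.
rewrite inS inT; case: (eqVneq i o) => [->|Hi]; first by constructor 1.
by case: (1 <= z i); [constructor 2|constructor 3].
Qed.

Lemma S_U0 i : i \in Sset -> i \in U0.
Proof. by rewrite inS !inE => /andP[_ ->]; rewrite orbT. Qed.

Lemma up_S : upward wv Sset.
Proof.
move=> a b Ha Hb; apply: (@le_lt_trans _ _ 0); last exact: wvS_gt0.
case: (trich b) => [->|Hb'|Hb']; first by rewrite wv0.
  by rewrite Hb' in Hb.
by apply: ltW; apply: wvT_lt0.
Qed.

Lemma up_U0 : upward wv U0.
Proof.
move=> a b Ha Hb; apply: (@lt_le_trans _ _ 0).
  by apply: wvT_lt0; rewrite /Tset inE Hb.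
case: (trich a) => [->|Ha'|Ha']; first by rewrite wv0.
  by apply: ltW; apply: wvS_gt0.
by move: Ha'; rewrite /Tset inE Ha.
Qed.

Lemma alpha_inj i j : alpha i = alpha j -> i = j.
Proof.
move=> H; apply: val_inj; case: (ltngtP i j) => // Hij.
  by have := amono Hij; rewrite H ltxx.
by have := amono Hij; rewrite H ltxx.
Qed.
Lemma beta_inj i j : beta i = beta j -> i = j.
Proof.
move=> H; apply: val_inj; case: (ltngtP i j) => // Hij.
  by have := bmono Hij; rewrite H ltxx.
by have := bmono Hij; rewrite H ltxx.
Qed.

Lemma wv_inj : injective wv.
Proof.
have un : u%:R != 0 :> R by rewrite gt_eqF ?u_gt0.
have tn : t%:R != 0 :> R by rewrite gt_eqF ?t_gt0.
move=> i j.
case: (trich i) => [->|Hi|Hi]; case: (trich j) => [->|Hj|Hj] // H.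
- by have := wvS_gt0 Hj; rewrite -H wv0 ltxx.
- by have := wvT_lt0 Hj; rewrite -H wv0 ltxx.
- by have := wvS_gt0 Hi; rewrite H wv0 ltxx.
- move: H; rewrite !wvS // => /(mulIf (invr_neq0 un)) /eqP.
  by rewrite (can_eq (addrK _)) => /eqP /alpha_inj.
- by have := wvS_gt0 Hi; rewrite H => /lt_trans /(_ (wvT_lt0 Hj)); rewrite ltxx.
- by have := wvT_lt0 Hi; rewrite H wv0 ltxx.
- by have := wvT_lt0 Hi; rewrite H => /lt_trans /(_ (wvS_gt0 Hj)); rewrite ltxx.
- move: H; rewrite !wvT // => /(mulIf (invr_neq0 tn)) /eqP.
  by move/eqP => H; apply: beta_inj; lra.
Qed.

Lemma sumT (f : 'I_n -> R) : \sum_(i in setT) f i = \sum_i f i.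
Proof. by apply: eq_bigl => i; rewrite inE. Qed.

Variable Bs : {set 'I_n}.
Hypothesis HBs : maxb M wv Bs.

Lemma HBs1 : Bs \in bases M. Proof. by case: HBs. Qed.

Lemma wt_lt B : B \in bases M -> B != Bs -> wt wv B < wt wv Bs.
Proof.
move=> HB Hne; rewrite lt_neqAle (proj2 HBs _ HB) andbT.
apply: contra Hne => /eqP Heq; apply/eqP; apply: (maxb_unique (M:=M) wv_inj) => //.
split=> // B' HB'; rewrite Heq; exact: (proj2 HBs).
Qed.

Definition v1 (i : 'I_n) (k : option 'I_n) : R :=
  match k with Some j => sunit u%:R i j | None => alpha i end.
Definition v2 (B : {set 'I_n}) (k : option 'I_n) : R :=
  match k with Some j => indic R B j | None => 0 end.
Definition v3 (i : 'I_n) (k : option 'I_n) : R :=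
  match k with Some j => sunit (- t%:R) i j | None => beta i end.

Lemma dot_v1 i : dot (lowfun wv) (v1 i) = wv i * u%:R - alpha i.
Proof. by rewrite dot_low /= dot_sunit. Qed.
Lemma dot_v2 B : dot (lowfun wv) (v2 B) = wt wv B.
Proof. by rewrite dot_low /= subr0 dot_indic. Qed.
Lemma dot_v3 i : dot (lowfun wv) (v3 i) = wv i * (- t%:R) - beta i.
Proof. by rewrite dot_low /= dot_sunit. Qed.

Lemma I1 i : wv i * u%:R - alpha i <= - alpha o.
Proof.
case: (trich i) => [->|Hi|Hi]; first by rewrite wv0 mul0r sub0r.
  by rewrite wvS // divfK ?gt_eqF ?u_gt0 // addrAC subrr add0r.
have H1 := alpha0 (i:=i); have H2 : wv i * u%:R < 0.
  by rewrite pmulr_llt0 ?u_gt0 // wvT_lt0.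
have Hi0 : i != o by move: Hi; rewrite inT => /andP[].
have := H1 Hi0; lra.
Qed.
Lemma I1eq i : i \in U0 -> wv i * u%:R - alpha i = - alpha o.
Proof.
case: (trich i) => [->|Hi|Hi] HU; first by rewrite wv0 mul0r sub0r.
  by rewrite wvS // divfK ?gt_eqF ?u_gt0 // addrAC subrr add0r.
by move: Hi; rewrite /Tset inE HU.
Qed.
Lemma J1 i : wv i * (- t%:R) - beta i <= - beta o.
Proof.
case: (trich i) => [->|Hi|Hi]; first by rewrite wv0 mul0r sub0r.
  have H1 := beta0 (i:=i); have H2 : 0 < wv i * t%:R.
    by rewrite pmulr_rgt0 ?t_gt0 // wvS_gt0.
  have Hi0 : i != o by move: Hi; rewrite inS => /andP[].
  have := H1 Hi0; rewrite mulrN; lra.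
rewrite wvT // mulrN divfK ?gt_eqF ?t_gt0 //; lra.
Qed.
Lemma J1eq i : i \notin Sset -> wv i * (- t%:R) - beta i = - beta o.
Proof.
case: (trich i) => [->|Hi|Hi] HS; first by rewrite wv0 mul0r sub0r.
  by rewrite Hi in HS.
rewrite wvT // mulrN divfK ?gt_eqF ?t_gt0 //; lra.
Qed.

Lemma face2 : forall y, face (lift2 M) (lowfun wv) y <-> forall k, y k = v2 Bs k.
Proof.
move=> y.
have Hlt : forall B, B \in bases M -> B != Bs ->
    dot (lowfun wv) (v2 B) < dot (lowfun wv) (v2 Bs).
  by move=> B HB Hne; rewrite !dot_v2 wt_lt.
exact: (@conv_uniq _ _ _ (bases M) v2 (lowfun wv) Bs HBs1 Hlt y).
Qed.

Lemma cell_pt (p q : 'I_n -> R) x :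
  (forall i, 0 <= p i) -> \sum_i p i = 1 -> (forall i, p i != 0 -> i \in U0) ->
  (forall i, 0 <= q i) -> \sum_i q i = 1 -> (forall i, q i != 0 -> i \notin Sset) ->
  (forall i, x i = p i * u%:R + indic R Bs i + q i * (- t%:R)) ->
  cell M t u alpha beta wv x.
Proof.
move=> p0 p1 pS q0 q1 qS Hx.
exists (fun k => (\sum_(i in setT) p i * v1 i k) +
   (\sum_(B in bases M) (if B == Bs then 1 else 0) * v2 B k) +
   (\sum_(i in setT) q i * v3 i k)); split; last first.
  by move=> i /=; rewrite !sum_sunit sum_ind ?HBs1 //= Hx.
apply: face_msum3.
- apply: (@conv_face _ _ _ setT v1 (lowfun wv) (- alpha o)) => //.
  + by move=> i _; rewrite dot_v1 I1.
  + by rewrite sumT.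
  + by move=> i _ /pS Hi; rewrite dot_v1 I1eq.
- by apply/face2 => k; rewrite sum_ind ?HBs1.
- apply: (@conv_face _ _ _ setT v3 (lowfun wv) (- beta o)) => //.
  + by move=> i _; rewrite dot_v3 J1.
  + by rewrite sumT.
  + by move=> i _ /qS Hi; rewrite dot_v3 J1eq.
Qed.

Lemma cellG_char x : cellG M wv x <-> forall i, x i = indic R Bs i.
Proof.
split.
  by move=> [y [/face2 Hy Px]] i; rewrite -Px Hy.
move=> Hx; exists (v2 Bs); split; first by apply/face2.
by move=> i; rewrite Hx.
Qed.

Lemma vertex_Bs : is_vertex (PM M) (indic R Bs).
Proof.
exists wv => x.
have Hlt : forall B, B \in bases M -> B != Bs ->
    dot wv (indic R B) < dot wv (indic R Bs).
  by move=> B HB Hne; rewrite !dot_indic wt_lt.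
exact: (@conv_uniq _ _ _ (bases M) (@indic R n) wv Bs HBs1 Hlt x).
Qed.

Lemma conv_some (I : finType) (A : {set I}) (p : I -> option 'I_n -> R) y :
  conv A p y -> conv A (fun i j => p i (Some j)) (fun j => y (Some j)).
Proof. by move=> [lam [H0 [H1 Hy]]]; exists lam; split=> //; split=> // k; rewrite Hy. Qed.

Lemma sum_dot1 (f : 'I_n -> R) : \sum_i f i = dot (fun _ => 1) f.
Proof. by rewrite /dot; apply: eq_bigr => i _; rewrite mul1r. Qed.

Lemma sum_lift y : Lift M t u alpha beta y ->
  \sum_i y (Some i) = u%:R + (#|Bs|)%:R - t%:R.
Proof.
move=> [a [b [c [Ha [Hb [Hc Hy]]]]]].
rewrite sum_dot1 (dot_add3 _ (a := fun i => a (Some i)) (b := fun i => b (Some i))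
   (d := fun i => c (Some i)) (fun i => Hy (Some i))).
rewrite (conv_const (conv_some Ha) (m := u%:R)); last first.
  by move=> i _ /=; rewrite dot_sunit mul1r.
rewrite (conv_const (conv_some Hb) (m := (#|Bs|)%:R)); last first.
  move=> B HB /=; rewrite dot_indic sumr_const.
  by rewrite (bases_card HB HBs1).
rewrite (conv_const (conv_some Hc) (m := - t%:R)) ?addrA //.
by move=> i _ /=; rewrite dot_sunit mul1r.
Qed.

Definition pt (p q : 'I_n -> R) (k : 'I_n) := p k * u%:R + indic R Bs k + q k * (- t%:R).

Lemma dot_scale (c f : 'I_n -> R) a : dot c (fun k => f k * a) = dot c f * a.
Proof. by rewrite /dot mulr_suml; apply: eq_bigr => k _; rewrite mulrA. Qed.

Lemma dot_pt c p q : dot c (pt p q) = dot c p * u%:R + dot c (indic R Bs) + dot c q * (- t%:R).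
Proof.
rewrite (dot_add3 c (a := fun k => p k * u%:R) (b := indic R Bs)
   (d := fun k => q k * (- t%:R)) (fun k => erefl)).
by rewrite !dot_scale.
Qed.

Lemma e0 (i k : 'I_n) : 0 <= sunit (1 : R) i k. Proof. by rewrite /sunit; case: (k == i). Qed.
Lemma e1 (i : 'I_n) : \sum_k sunit (1 : R) i k = 1.
Proof. by rewrite sum_dot1 dot_sunit mul1r. Qed.
Lemma e2 (i k : 'I_n) : sunit (1 : R) i k != 0 -> k = i.
Proof. by rewrite /sunit; case: (eqVneq k i) => //; rewrite eqxx. Qed.

Lemma dot_shift (w w' : 'I_n -> R) d v : (forall i, w i = w' i + d) ->
  dot w v = dot w' v + d * \sum_k v k.
Proof.
move=> H; rewrite /dot mulr_sumr -big_split /=; apply: eq_bigr => k _.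
by rewrite H mulrDl.
Qed.

Lemma max_cell : maximal_cell M t u alpha beta wv.
Proof.
move=> w' Hsub.
have key : forall x1 x2, cell M t u alpha beta wv x1 -> cell M t u alpha beta wv x2 ->
    dot wv x1 - dot w' x1 = dot wv x2 - dot w' x2.
  move=> x1 x2 H1 H2; have H1' := Hsub _ H1; have H2' := Hsub _ H2.
  move: H1 H2 H1' H2' => [y1 [[L1 M1] P1]] [y2 [[L2 M2] P2]]
    [y1' [[L1' M1'] P1']] [y2' [[L2' M2'] P2']].
  have := M1 _ L1'; have := M1' _ L1; have := M2 _ L2'; have := M2' _ L2.
  have := M1 _ L2; have := M2 _ L1; have := M1' _ L2'; have := M2' _ L1'.
  rewrite !dot_low (dot_ext wv P1) (dot_ext wv P2) (dot_ext wv P1') (dot_ext wv P2').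
  rewrite (dot_ext w' P1) (dot_ext w' P2) (dot_ext w' P1') (dot_ext w' P2').
  lra.
have un : u%:R != 0 :> R by rewrite gt_eqF ?u_gt0.
have tn : t%:R != 0 :> R by rewrite gt_eqF ?t_gt0.
have Hd : forall i, wv i = w' i + (wv o - w' o).
  move=> i; case: (boolP (i \in U0)) => Hi.
    have C1 : cell M t u alpha beta wv (pt (sunit 1 i) (sunit 1 o)).
      apply: (cell_pt (p := sunit 1 i) (q := sunit 1 o)) => //; try exact: e0; try exact: e1.
        by move=> k /e2 ->.
      by move=> k /e2 ->; rewrite inS eqxx.
    have C2 : cell M t u alpha beta wv (pt (sunit 1 o) (sunit 1 o)).
      apply: (cell_pt (p := sunit 1 o) (q := sunit 1 o)) => //; try exact: e0; try exact: e1.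
        by move=> k /e2 ->; rewrite inE eqxx.
      by move=> k /e2 ->; rewrite inS eqxx.
    have := key _ _ C1 C2; rewrite !dot_pt !dot_sunit !mulr1 => H.
    have : u%:R * (wv i - w' i) = u%:R * (wv o - w' o) by lra.
    move/(mulfI un) => H2; lra.
  have HiS : i \notin Sset by apply: contra Hi; apply: S_U0.
  have C1 : cell M t u alpha beta wv (pt (sunit 1 o) (sunit 1 i)).
    apply: (cell_pt (p := sunit 1 o) (q := sunit 1 i)) => //; try exact: e0; try exact: e1.
      by move=> k /e2 ->; rewrite inE eqxx.
    by move=> k /e2 ->.
  have C2 : cell M t u alpha beta wv (pt (sunit 1 o) (sunit 1 o)).
    apply: (cell_pt (p := sunit 1 o) (q := sunit 1 o)) => //; try exact: e0; try exact: e1.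
      by move=> k /e2 ->; rewrite inE eqxx.
    by move=> k /e2 ->; rewrite inS eqxx.
  have := key _ _ C1 C2; rewrite !dot_pt !dot_sunit !mulr1 => H.
  have : t%:R * (wv i - w' i) = t%:R * (wv o - w' o) by lra.
  move/(mulfI tn) => H2; lra.
move=> x [y [[Ly My] Py]]; exists y; split=> //; split=> // y'' Ly''.
have := My _ Ly''; rewrite !dot_low !(dot_shift _ Hd) !sum_lift //.
lra.
Qed.

Lemma partition (f : 'I_n -> R) :
  \sum_i f i = f o + \sum_(i in Sset) f i + \sum_(i in Tset) f i.
Proof.
rewrite (bigD1 o) //= (bigID (fun i => i \in Sset)) /= addrA.
congr (_ + _ + _); apply: eq_bigl => i; rewrite ?inS ?inT.
  by case: (i != o); rewrite ?andbF.
by case: (i != o); case: (1 <= z i).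
Qed.

Lemma indic_le1 (S : {set 'I_n}) i : indic R S i <= 1.
Proof. by rewrite /indic; case: (i \in S). Qed.
Lemma indic_ge0 (S : {set 'I_n}) i : 0 <= indic R S i.
Proof. by rewrite /indic; case: (i \in S). Qed.

Lemma lattice x : (forall i, x i = (z i)%:~R) -> bigPoly M t u x ->
  cell M t u alpha beta wv x.
Proof.
move=> Hz [a [b [c [Ha [Hb [Hc Hx]]]]]].
have un : u%:R != 0 :> R by rewrite gt_eqF ?u_gt0.
have tn : t%:R != 0 :> R by rewrite gt_eqF ?t_gt0.
pose y i := x i - indic R Bs i.
have yS : forall i, i \in Sset -> 0 <= y i.
  move=> i; rewrite inS => /andP[_ H1]; rewrite /y subr_ge0 Hz.
  by apply: (le_trans (indic_le1 _ _)); rewrite ler1z.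
have yT : forall i, i \in Tset -> y i <= 0.
  move=> i; rewrite inT => /andP[_ H1]; rewrite /y subr_le0 Hz.
  apply: (le_trans _ (indic_ge0 _ _)); rewrite lerz0; lia.
have sumind : forall S : {set 'I_n}, \sum_(i in S) y i =
    dot (indic R S) a + dot (indic R S) b + dot (indic R S) c - (#|Bs :&: S|)%:R.
  move=> S; rewrite /y sumrB -dot_indicl (dot_add3 _ Hx).
  by rewrite sum_indic_card setIC.
have sumS : \sum_(i in Sset) y i <= u%:R.
  rewrite sumind.
  have h1 : dot (indic R Sset) a <= u%:R.
    apply: (conv_le Ha) => i _; rewrite dot_sunit.
    by rewrite ler_piMl ?indic_le1 // ltW // u_gt0.
  have h2 : dot (indic R Sset) b <= (#|Bs :&: Sset|)%:R.
    apply: (conv_le Hb) => B HB; rewrite dot_indic sum_indic_card ler_nat.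
    exact: (maxb_up HBs HB up_S).
  have h3 : dot (indic R Sset) c <= 0.
    apply: (conv_le Hc) => i _; rewrite dot_sunit mulrN oppr_le0.
    by rewrite mulr_ge0 ?indic_ge0 // ltW // t_gt0.
  lra.
have sumTT : - t%:R <= \sum_(i in Tset) y i.
  rewrite sumind.
  have h1 : 0 <= dot (indic R Tset) a.
    apply: (conv_ge Ha) => i _; rewrite dot_sunit.
    by rewrite mulr_ge0 ?indic_ge0 // ltW // u_gt0.
  have h2 : (#|Bs :&: Tset|)%:R <= dot (indic R Tset) b.
    apply: (conv_ge Hb) => B HB; rewrite dot_indic sum_indic_card ler_nat.
    apply: (maxb_down HBs HB); rewrite /Tset setCK; exact: up_U0.
  have h3 : - t%:R <= dot (indic R Tset) c.
    apply: (conv_ge Hc) => i _; rewrite dot_sunit mulrN lerN2.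
    by rewrite ler_piMl ?indic_le1 // ltW // t_gt0.
  lra.
have sumAll : \sum_i y i = u%:R - t%:R.
  have -> : \sum_i y i = \sum_(i in setT) y i by rewrite sumT.
  rewrite sumind.
  have E : forall (f : 'I_n -> R), dot (indic R setT) f = dot (fun _ => 1) f.
    by move=> f; apply: eq_bigr => i _; rewrite /indic inE.
  rewrite !E (conv_const Ha (m := u%:R)); last by move=> i _; rewrite dot_sunit mul1r.
  rewrite (conv_const Hb (m := (#|Bs|)%:R)); last first.
    by move=> B HB; rewrite dot_indic /= sumr_const (bases_card HB HBs1).
  rewrite (conv_const Hc (m := - t%:R)); last by move=> i _; rewrite dot_sunit mul1r.
  rewrite setIT; lra.
have Hpart := partition y; rewrite sumAll in Hpart.
pose p i := if i == o then 1 - (\sum_(k in Sset) y k) / u%:R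
            else if i \in Sset then y i / u%:R else 0.
pose q i := if i == o then 1 + (\sum_(k in Tset) y k) / t%:R
            else if i \in Tset then - y i / t%:R else 0.
have nS0 : o \notin Sset by rewrite inS eqxx.
have nT0 : o \notin Tset by rewrite inT eqxx.
have ST : forall i, i \in Sset -> i \notin Tset.
  by move=> i; rewrite inS inT => /andP[-> ->].
have pSv : forall i, i \in Sset -> p i = y i / u%:R.
  move=> i Hi; rewrite /p Hi; case: eqP => // Heq.
  by move: Hi; rewrite Heq (negbTE nS0).
have pTv : forall i, i \in Tset -> p i = 0.
  move=> i Hi; rewrite /p; case: eqP => [Heq|_].
    by move: Hi; rewrite Heq (negbTE nT0).
  by case: ifP => // HS; move: (ST _ HS); rewrite Hi.
have qTv : forall i, i \in Tset -> q i = - y i / t%:R.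
  move=> i Hi; rewrite /q Hi; case: eqP => // Heq.
  by move: Hi; rewrite Heq (negbTE nT0).
have qSv : forall i, i \in Sset -> q i = 0.
  move=> i Hi; rewrite /q; case: eqP => [Heq|_].
    by move: Hi; rewrite Heq (negbTE nS0).
  by rewrite (negbTE (ST _ Hi)).
have po : p o = 1 - (\sum_(k in Sset) y k) / u%:R by rewrite /p eqxx.
have qo : q o = 1 + (\sum_(k in Tset) y k) / t%:R by rewrite /q eqxx.
apply: (cell_pt (p := p) (q := q)).
- move=> i; case: (trich i) => [->|Hi|Hi].
  + rewrite po subr_ge0 ler_pdivrMr ?u_gt0 // mul1r //.
  + by rewrite pSv // divr_ge0 ?yS // ltW // u_gt0.
  + by rewrite pTv.
- have s1 : \sum_(i in Sset) p i = \sum_(i in Sset) y i / u%:R.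
    by apply: eq_bigr => i; apply: pSv.
  have s2 : \sum_(i in Tset) p i = 0 by apply: big1 => i; apply: pTv.
  by rewrite partition po s1 s2 addr0 -mulr_suml subrK.
- move=> i; case: (trich i) => [->|Hi|Hi]; first by rewrite inE eqxx.
    by move=> _; apply: S_U0.
  by rewrite pTv // eqxx.
- move=> i; case: (trich i) => [->|Hi|Hi].
  + rewrite qo; have h : -1 <= (\sum_(k in Tset) y k) / t%:R.
      by rewrite ler_pdivlMr ?t_gt0 // mulN1r.
    lra.
  + by rewrite qSv.
  + by rewrite qTv // divr_ge0 ?oppr_ge0 ?yT // ltW // t_gt0.
- have s1 : \sum_(i in Tset) q i = \sum_(i in Tset) - y i / t%:R.
    by apply: eq_bigr => i; apply: qTv.
  have s2 : \sum_(i in Sset) q i = 0 by apply: big1 => i; apply: qSv.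
  by rewrite partition qo s1 s2 addr0 -mulr_suml sumrN mulNr addrK.
- move=> i; case: (trich i) => [->|Hi|Hi]; first by rewrite nS0.
    by rewrite qSv // eqxx.
  by move=> _; apply: contraT; rewrite negbK => /ST; rewrite Hi.
- move=> i; case: (trich i) => [->|Hi|Hi].
  + rewrite po qo mulrBl mul1r divfK // mulrDl mul1r mulrN divfK //.
    have -> : x o = y o + indic R Bs o by rewrite /y subrK.
    lra.
  + rewrite pSv // qSv // divfK // mul0r addr0.
    by rewrite /y subrK.
  + rewrite pTv // qTv // mul0r add0r mulrN !mulNr divfK // opprK.
    by rewrite /y addrC subrK.
Qed.

End Main.


Theorem mainTheorem6 (R : realFieldType) (n : nat) (M : matroid n) (t u : nat)
    (alpha beta : 'I_n -> R) :
  (0 < t)%N -> (0 < u)%N ->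
  (forall i, 0 < alpha i) -> (forall i j : 'I_n, (i < j)%N -> alpha i < alpha j) ->
  (forall i, 0 < beta i) -> (forall i j : 'I_n, (i < j)%N -> beta i < beta j) ->
  forall x : 'I_n -> R,
    (exists z : 'I_n -> int, forall i, x i = (z i)%:~R) ->
    bigPoly M t u x ->
    exists w : 'I_n -> R, top_degree M t u alpha beta w /\ cell M t u alpha beta w x.
Proof.
case: n M alpha beta => [|n'] M alpha beta tpos upos _ amono _ bmono x [z Hz] Hx.
  exfalso; move: Hx => [a [b [c [[lam [_ [H1 _]]] _]]]].
  have H0 : \sum_(i in [set: 'I_0]) lam i = 0 by apply: big1 => -[].
  by move: H1; rewrite H0 => /eqP; rewrite eq_sym oner_eq0.
have [Bs HBs] := maxb_exists M (wv t u alpha beta z).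
exists (wv t u alpha beta z); split; last exact: (lattice tpos upos amono bmono HBs Hz Hx).
split; first exact: (max_cell tpos upos amono bmono HBs).
exists (indic R Bs); split; first exact: (vertex_Bs tpos upos amono bmono HBs).
exact: (cellG_char tpos upos amono bmono HBs).
Qed.
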